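(* Let $A\in\mathbb{C}^{n\times n}$, $\lambda\in\mathbb{C}$ a simple eigenvalue of $A$, $v\in\mathbb{C}^n\setminus\{0\}$ with $Av=\lambda v$ and $u\in\mathbb{C}^n\setminus\{0\}$ with $A^*u=\bar\lambda u$. Then $\frac{\|u\|\,\|v\|}{|\langle u,v\rangle|}\le\sqrt{1+\mu(A,\lambda,v)^2}$.
   Context: For $v\ne0$, $T_v=v^\perp\subset\mathbb{C}^n$, $P_{v^\perp}$ the orthogonal projection onto $T_v$, $A_{\lambda,v}=P_{v^\perp}(A-\lambda\mathrm{Id})|_{T_v}:T_v\to T_v$, and $\mu(A,\lambda,v)=\|A\|_F\|A_{\lambda,v}^{-1}\|$ (Frobenius norm times operator norm). The quantity $\|u\|\|v\|/|\langle u,v\rangle|$ is the eigenvalue condition number $\mu_\lambda(A,\lambda,v)$. *)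

(* Defs.v *)
From HB Require Import structures.
From mathcomp Require Import all_boot all_order all_algebra.
From mathcomp Require Import complex.
From mathcomp Require Import boolp classical_sets reals.
Set Implicit Arguments. Unset Strict Implicit. Unset Printing Implicit Defensive.
Import Order.TTheory GRing.Theory Num.Theory.
Local Open Scope ring_scope.

Section Defs.
Variable R : realType.
Local Notation C := (R[i]).

Definition cabs (z : C) : R := ComplexField.Normc.normc z.

Definition cdot n (x y : 'cV[C]_n) : C := \sum_i x i 0 * conjc (y i 0).

Definition vnorm n (x : 'cV[C]_n) : R := Num.sqrt (\sum_i cabs (x i 0) ^+ 2).

Definition frob n (A : 'M[C]_n) : R :=
  Num.sqrt (\sum_i \sum_j cabs (A i j) ^+ 2).

Definition adjmx n (A : 'M[C]_n) : 'M[C]_n := map_mx conjc A^T.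

Definition in_perp n (v x : 'cV[C]_n) : Prop := cdot x v = 0.

Definition proj_perp n (v x : 'cV[C]_n) : 'cV[C]_n :=
  x - (cdot x v / cdot v v) *: v.

Definition Alv n (A : 'M[C]_n) (lam : C) (v x : 'cV[C]_n) : 'cV[C]_n :=
  proj_perp v ((A - lam%:M) *m x).

(* the inverse of A_{lam,v} : T_v -> T_v; for y in T_v it is the (unique when
   A_{lam,v} is invertible) x in T_v with A_{lam,v} x = y *)
Definition Alv_inv n (A : 'M[C]_n) (lam : C) (v y : 'cV[C]_n) : 'cV[C]_n :=
  xget 0 [set x | in_perp v x /\ Alv A lam v x = y].

Definition opnorm_perp n (v : 'cV[C]_n) (f : 'cV[C]_n -> 'cV[C]_n) : R :=
  sup [set vnorm (f y) | y in [set y | in_perp v y /\ vnorm y <= 1]].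

Definition mu n (A : 'M[C]_n) (lam : C) (v : 'cV[C]_n) : R :=
  frob A * opnorm_perp v (Alv_inv A lam v).

End Defs.

(* Main.v *)
Require Import Defs.
From HB Require Import structures.
From mathcomp Require Import all_boot all_order all_algebra.
From mathcomp Require Import complex.
From mathcomp Require Import boolp classical_sets reals.
From mathcomp Require Import ring lra.
Import Order.TTheory GRing.Theory Num.Theory.
Local Open Scope ring_scope.

Set Implicit Arguments. Unset Strict Implicit.

Section Basic.
Variable R : realType.
Local Notation C := R[i].
Variable n : nat.
Implicit Types (x y z : 'cV[C]_n) (a b : C).

Lemma cabsC (z : C) : (cabs z)%:C%C = `|z|.
Proof. by []. Qed.

Lemma cabs_ge0 (z : C) : 0 <= cabs z.
Proof. by case: z => a b; apply: sqrtr_ge0. Qed.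

Definition nR x : R := \sum_i cabs (x i 0) ^+ 2.

Lemma nR_ge0 x : 0 <= nR x.
Proof. by apply: sumr_ge0 => i _; apply: sqr_ge0. Qed.

Lemma vnormE x : vnorm x = Num.sqrt (nR x).
Proof. by []. Qed.

Lemma vnorm_ge0 x : 0 <= vnorm x.
Proof. exact: sqrtr_ge0. Qed.

Lemma vnorm_sqr x : vnorm x ^+ 2 = nR x.
Proof. by rewrite vnormE sqr_sqrtr // nR_ge0. Qed.

Lemma cdotE x y : cdot x y = \sum_i x i 0 * (y i 0)^*.
Proof. by []. Qed.

Lemma nRC x : (nR x)%:C%C = cdot x x.
Proof.
rewrite /nR rmorph_sum /=; apply: eq_bigr => i _.
by rewrite rmorphXn /= cabsC normCK.
Qed.

Lemma cdotDl x y z : cdot (x + y) z = cdot x z + cdot y z.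
Proof. by rewrite /cdot -big_split /=; apply: eq_bigr => i _; rewrite mxE mulrDl. Qed.

Lemma cdotZl a x y : cdot (a *: x) y = a * cdot x y.
Proof. by rewrite /cdot mulr_sumr; apply: eq_bigr => i _; rewrite mxE mulrA. Qed.

Lemma cdotNl x y : cdot (- x) y = - cdot x y.
Proof. by rewrite -scaleN1r cdotZl mulN1r. Qed.

Lemma cdotBl x y z : cdot (x - y) z = cdot x z - cdot y z.
Proof. by rewrite cdotDl cdotNl. Qed.

Lemma cdotC x y : cdot y x = (cdot x y)^*.
Proof.
rewrite /cdot rmorph_sum; apply: eq_bigr => i _.
by rewrite rmorphM /= conjCK mulrC.
Qed.

Lemma cdotDr x y z : cdot x (y + z) = cdot x y + cdot x z.
Proof. by rewrite cdotC cdotDl rmorphD /= -!cdotC. Qed.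

Lemma cdotZr a x y : cdot x (a *: y) = a^* * cdot x y.
Proof. by rewrite cdotC cdotZl rmorphM /= -cdotC. Qed.

Lemma cdotBr x y z : cdot x (y - z) = cdot x y - cdot x z.
Proof. by rewrite cdotC cdotBl rmorphB /= -!cdotC. Qed.

Lemma cdot0l y : cdot 0 y = 0.
Proof. by rewrite /cdot big1 // => i _; rewrite mxE mul0r. Qed.

Lemma cdot0r y : cdot y 0 = 0.
Proof. by rewrite cdotC cdot0l rmorph0. Qed.

Lemma cdot_ge0 x : 0 <= cdot x x.
Proof. by rewrite -nRC -(rmorph0 (real_complex R)) lecR nR_ge0. Qed.

Lemma nR_eq0 x : nR x = 0 -> x = 0.
Proof.
move=> /eqP; rewrite /nR psumr_eq0 => [/allP H|i _]; last exact: sqr_ge0.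
apply/matrixP => i j; rewrite ord1 mxE.
have /implyP := H i (mem_index_enum _); rewrite sqrf_eq0 => /(_ isT) /eqP h.
by apply/eqP; rewrite -normr_eq0 -cabsC h.
Qed.

Lemma cdot_mulmx (M : 'M[C]_n) x y : cdot (M *m x) y = cdot x (adjmx M *m y).
Proof.
rewrite /cdot.
under eq_bigr do rewrite mxE big_distrl /=.
rewrite exchange_big /=; apply: eq_bigr => j _.
rewrite mxE rmorph_sum big_distrr /=; apply: eq_bigr => i _.
by rewrite !mxE rmorphM /= conjcK [RHS]mulrCA mulrA.
Qed.

End Basic.

Section CS.
Variable R : realType.
Local Notation C := R[i].
Variable n : nat.
Implicit Types (x y z : 'cV[C]_n) (a b : C).

Lemma cdot_eq0 x : cdot x x = 0 -> x = 0.
Proof.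
move=> h; apply: nR_eq0; apply: (@complexI R); rewrite nRC h; by [].
Qed.

Lemma CSC x y : `|cdot x y| ^+ 2 <= cdot x x * cdot y y.
Proof.
have [->|y0] := eqVneq y 0; first by rewrite !cdot0r normr0 expr0n /= mulr0.
set d := cdot y y; set c := cdot x y.
have d0 : d != 0 by apply: contra y0 => /eqP /cdot_eq0 ->.
have dge : 0 <= d by apply: cdot_ge0.
have dgt : 0 < d by rewrite lt_def d0.
set t := c / d.
have := cdot_ge0 (x - t *: y).
rewrite cdotBl !cdotBr !cdotZl !cdotZr -/d -/c (cdotC x y) -/c.
have tJ : t^* = c^* / d by rewrite /t rmorphM fmorphV /= (geC0_conj dge).
rewrite tJ normCK /t.
have -> : cdot x x - c^* / d * c - (c / d * c^* - c / d * (c^* / d * d)) =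
  cdot x x - c * c^* / d by field.
rewrite subr_ge0 ler_pdivrMr //.
Qed.

End CS.

Section Bounds.
Variable R : realType.
Local Notation C := R[i].
Variable n : nat.
Implicit Types (x y z : 'cV[C]_n) (a b : C).

Lemma CSR x y : cabs (cdot x y) ^+ 2 <= nR x * nR y.
Proof.
rewrite -lecR rmorphXn rmorphM /= cabsC !nRC; exact: CSC.
Qed.

Lemma cabs_conj (z : C) : cabs z^* = cabs z.
Proof. by apply: (@complexI R); rewrite !cabsC norm_conjC. Qed.

Lemma cabs_cdot_le x y : cabs (cdot x y) <= vnorm x * vnorm y.
Proof.
have h := sqrtr_sqr (cabs (cdot x y)); rewrite ger0_norm ?cabs_ge0 in h.
rewrite !vnormE -sqrtrM ?nR_ge0 // -h.
rewrite ler_sqrt ?mulr_ge0 ?nR_ge0 //; first exact: CSR. exact: isT.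
Qed.

Lemma frob_sqr (M : 'M[C]_n) : frob M ^+ 2 = \sum_i \sum_j cabs (M i j) ^+ 2.
Proof.
rewrite sqr_sqrtr //; apply: sumr_ge0 => i _; apply: sumr_ge0 => j _; exact: sqr_ge0.
Qed.

Lemma frob_ge0 (M : 'M[C]_n) : 0 <= frob M.
Proof. exact: sqrtr_ge0. Qed.

Lemma nR_mulmx (M : 'M[C]_n) x : nR (M *m x) <= frob M ^+ 2 * nR x.
Proof.
pose xc : 'cV[C]_n := \col_j (x j 0)^*.
have nxc : nR xc = nR x by apply: eq_bigr => j _; rewrite mxE cabs_conj.
rewrite frob_sqr mulr_suml /nR; apply: ler_sum => i _.
have -> : (M *m x) i 0 = cdot (\col_j M i j) xc.
  by rewrite mxE /cdot; apply: eq_bigr => j _; rewrite !mxE conjcK.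
have := CSR (\col_j M i j) xc; rewrite nxc.
by congr (_ <= _ * _); apply: eq_bigr => j _; rewrite mxE.
Qed.

Lemma vnorm_mulmx (M : 'M[C]_n) x : vnorm (M *m x) <= frob M * vnorm x.
Proof.
have h := sqrtr_sqr (frob M); rewrite ger0_norm ?frob_ge0 in h.
rewrite !vnormE -h -sqrtrM ?sqr_ge0 //.
rewrite ler_sqrt ?mulr_ge0 ?sqr_ge0 ?nR_ge0 //; first exact: nR_mulmx. all: try exact: frob_ge0. all: exact: isT.
Qed.

Lemma vnormZ a x : vnorm (a *: x) = cabs a * vnorm x.
Proof.
rewrite !vnormE /nR.
have -> : \sum_i cabs ((a *: x) i 0) ^+ 2 = cabs a ^+ 2 * \sum_i cabs (x i 0) ^+ 2.
  rewrite mulr_sumr; apply: eq_bigr => i _; rewrite mxE -exprMn; congr (_ ^+ 2).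
  by apply: (@complexI R); rewrite rmorphM /= !cabsC normrM.
by rewrite sqrtrM ?sqr_ge0 // sqrtr_sqr ger0_norm ?cabs_ge0.
Qed.

End Bounds.

Section CharPoly.
Variable F : fieldType.

Lemma char_poly_sim n (A P : 'M[F]_n) : P \in unitmx ->
  char_poly (invmx P *m A *m P) = char_poly A.
Proof.
move=> Pu; rewrite /char_poly /char_poly_mx.
set f := (@polyC F).
have -> : 'X%:M - map_mx f (invmx P *m A *m P) =
   map_mx f (invmx P) *m ('X%:M - map_mx f A) *m map_mx f P.
  rewrite mulmxBr mulmxBl !map_mxM -!mulmxA.
  rewrite [map_mx f (invmx P) *m ('X%:M *m _)]mulmxA scalar_mxC -mulmxA.
  have h : map_mx f (invmx P) *m map_mx f P = 1%:M.
    by rewrite -map_mxM mulVmx // map_mx1.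
  by rewrite h mulmx1.
rewrite !det_mulmx !det_map_mx mulrC mulrA -rmorphM /= det_inv mulfV ?mul1r //.
by rewrite -unitfE -unitmxE.
Qed.

Lemma char_poly_col0 m (M : 'M[F]_m.+1) :
  (forall i : 'I_m.+1, i != 0 -> M i 0 = 0) ->
  char_poly M = ('X - (M 0 0)%:P) * char_poly (row' 0 (col' 0 M)).
Proof.
move=> H; rewrite /char_poly (expand_det_col _ 0) (bigD1 0) //= big1 ?addr0.
  rewrite /cofactor row'_col'_char_poly_mx addn0 expr0 mul1r.
  by rewrite !mxE eqxx mulr1n.
move=> i i0; rewrite !mxE (negbTE i0) mulr0n (H i i0) polyC0 subr0 mul0r //.
Qed.

End CharPoly.

Section Mult.
Variable R : realType.
Local Notation C := R[i].

Lemma rowfree2 n (v x : 'cV[C]_n) : v != 0 -> x != 0 -> cdot x v = 0 ->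
  row_free (\matrix_(i < 2, j < n) (if i == 0 then v j 0 else x j 0)).
Proof.
move=> v0 x0 xv; rewrite -kermx_eq0; apply/rowV0P => u /sub_kermxP uW0.
have s0 : u 0 0 *: v + u 0 1 *: x = 0.
  apply/matrixP => j k; rewrite ord1; have := congr1 (fun M : 'M[C]_(1,n) => M 0 j) uW0.
  have e0 : (ord0 : 'I_2) = 0 by apply: val_inj.
  have e1 : lift ord0 (ord0 : 'I_1) = 1 :> 'I_2 by apply: val_inj.
  by rewrite !mxE big_ord_recl big_ord1 /= !mxE e0 e1 eqxx.

have d0 : cdot v v != 0.
  by apply: contra v0 => /eqP /cdot_eq0 ->.
have u0 : u 0 0 = 0.
  have := congr1 (fun y => cdot y v) s0; rewrite cdotDl !cdotZl xv mulr0 addr0 cdot0l.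
  by move/eqP; rewrite mulf_eq0 (negbTE d0) orbF => /eqP.
have u1 : u 0 1 = 0.
  move: s0; rewrite u0 scale0r add0r => /eqP; rewrite scaler_eq0 (negbTE x0) orbF.
  by move/eqP.
by apply/rowP => i; rewrite mxE; case: i => [[|[|//]]] Hi; 
  [move: u0 | move: u1]; congr (u 0 _ = _); apply: val_inj.
Qed.


Lemma pidE m (K : 'M[C]_(m.+2)) (i : 'I_2) j :
  ((pid_mx 2 : 'M[C]_(2, m.+2)) *m K) i j = K (widen_ord (isT : (2 <= m.+2)%N) i) j.
Proof. by rewrite (pid_mxErow _ (isT : (2 <= m.+2)%N)) mul_rowsub_mx mul1mx mxE. Qed.

Lemma entry_delta n (M : 'M[C]_n) i j : M i j = (M *m delta_mx j (0 : 'I_1)) i 0.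
Proof. by rewrite -colE mxE. Qed.

Lemma mult2 m (A : 'M[C]_(m.+2)) lam v x c :
  v != 0 -> x != 0 -> cdot x v = 0 -> A *m v = lam *: v ->
  A *m x = lam *: x + c *: v ->
  ('X - lam%:P) ^+ 2 %| char_poly A.
Proof.
move=> v0 x0 xv Av Ax.
pose i0 : 'I_(m.+2) := ord0.
pose i1 : 'I_(m.+2) := lift ord0 ord0.
pose W := \matrix_(i < 2, j < m.+2) (if i == 0 then v j 0 else x j 0).
pose F : 'M[C]_(m.+2) :=
  \matrix_(k, j) (if k == i0 then v j 0 else if k == i1 then x j 0 else 0).
have rf := rowfree2 v0 x0 xv.
have w0 : widen_ord (isT : (2 <= m.+2)%N) 0 = i0 by apply: val_inj.
have w1 : widen_ord (isT : (2 <= m.+2)%N) 1 = i1 by apply: val_inj.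
have EF : (pid_mx 2 : 'M[C]_(2, m.+2)) *m F = W.
  apply/matrixP => i j; rewrite pidE !mxE.
  case: i => [[|[|//]]] Hi.
    by rewrite (_ : Ordinal Hi = 0) ?w0 ?eqxx //; apply: val_inj.
  by rewrite (_ : Ordinal Hi = 1) ?w1 ?eqxx //; apply: val_inj.
have rk : \rank ((pid_mx 2 : 'M[C]_(2, m.+2)) *m F) = \rank (pid_mx 2 : 'M[C]_(2, m.+2)).
  by rewrite EF rank_pid_mx //; apply/eqP.
have [g gu hg] := complete_unitmx rk.
have gv : forall k, g i0 k = v k 0.
  move=> k; have := congr1 (fun M : 'M[C]_(2, m.+2) => M 0 k) hg.
  by rewrite /= !pidE w0 mxE eqxx => <-.
have gx : forall k, g i1 k = x k 0.
  move=> k; have := congr1 (fun M : 'M[C]_(2, m.+2) => M 1 k) hg.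
  by rewrite /= !pidE w1 mxE => <-.
pose P := g^T.
have Pu : P \in unitmx by rewrite unitmx_tr.
have Pe0 : P *m delta_mx i0 (0:'I_1) = v.
  by apply/matrixP => k l; rewrite ord1 -colE !mxE gv.
have Pe1 : P *m delta_mx i1 (0:'I_1) = x.
  by apply/matrixP => k l; rewrite ord1 -colE !mxE gx.
pose M := invmx P *m A *m P.
have Me0 : M *m delta_mx i0 (0:'I_1) = lam *: delta_mx i0 (0:'I_1).
  by rewrite /M -!mulmxA Pe0 Av -scalemxAr -Pe0 mulKmx.
have Me1 : M *m delta_mx i1 (0:'I_1) = lam *: delta_mx i1 (0:'I_1) + c *: delta_mx i0 (0:'I_1).
  rewrite /M -!mulmxA Pe1 Ax mulmxDr -!scalemxAr -Pe0 -Pe1 !mulKmx //.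
have cA : char_poly A = char_poly M by rewrite char_poly_sim.
clearbody M.
have HM : forall i : 'I_m.+2, i != 0 -> M i 0 = 0.
  move=> i i0'; rewrite (entry_delta M) (_ : 0 = i0) // Me0 !mxE.
  by rewrite (negbTE i0') mulr0.
have M00 : M 0 0 = lam.
  by rewrite (entry_delta M) (_ : 0 = i0) // Me0 !mxE eqxx mulr1.
pose M1 := row' 0 (col' 0 M).
have HM1 : forall i : 'I_m.+1, i != 0 -> M1 i 0 = 0.
  move=> i i0'; rewrite /M1 !mxE (entry_delta M) (_ : lift 0 0 = i1) //.
  rewrite Me1 !mxE.
  have -> : (lift 0 i == i1) = false.
    apply/negbTE; apply: contra i0' => /eqP h; apply/eqP/val_inj.
    by move: (congr1 val h) => /=; rewrite /bump /= => -[].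
  have -> : (lift 0 i == i0) = false.
    by apply/negbTE; apply/eqP => /(congr1 val).
  by rewrite !mulr0 addr0.
have M100 : M1 0 0 = lam.
  rewrite /M1 !mxE (entry_delta M) (_ : lift 0 0 = i1) // Me1 !mxE.
  have -> : (lift 0 (0 : 'I_m.+1) == i1) by apply/eqP/val_inj.
  have -> : (lift 0 (0 : 'I_m.+1) == i0) = false by apply/negbTE; apply/eqP => /(congr1 val).
  by rewrite mulr1 mulr0 addr0.
rewrite cA char_poly_col0 // M00 (char_poly_col0 HM1) -/M1 M100 mulrA -expr2.
exact: dvdp_mulIl.
Qed.


Lemma mult2n n (A : 'M[C]_n) lam v x c :
  v != 0 -> x != 0 -> cdot x v = 0 -> A *m v = lam *: v ->
  A *m x = lam *: x + c *: v ->
  (2 <= mup lam (char_poly A))%N.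
Proof.
move=> v0 x0 xv Av Ax.
have := rank_leq_col (\matrix_(i < 2, j < n) (if i == 0 then v j 0 else x j 0)).
have /eqP -> := rowfree2 v0 x0 xv.
move: A v x v0 x0 xv Av Ax; case: n => [|[|m]] // A v x v0 x0 xv Av Ax _.
rewrite mup_geq ?monic_neq0 ?char_poly_monic //.
exact: mult2 v0 x0 xv Av Ax.
Qed.

Lemma Alv_inj n (A : 'M[C]_n) lam v x :
  mup lam (char_poly A) = 1%N -> v != 0 -> A *m v = lam *: v ->
  in_perp v x -> Alv A lam v x = 0 -> x = 0.
Proof.
move=> hm v0 Av xp hx; apply/eqP; apply/negPn/negP => x0.
set c := cdot ((A - lam%:M) *m x) v / cdot v v.
have Ax : A *m x = lam *: x + c *: v.
  move: hx; rewrite /Alv /proj_perp -/c => /eqP; rewrite subr_eq0 => /eqP.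
  by rewrite mulmxBl mul_scalar_mx => <-; rewrite addrC subrK.
have := mult2n v0 x0 xp Av Ax; rewrite hm //.
Qed.

End Mult.

Section Inv.
Variable R : realType.
Local Notation C := R[i].
Variable n : nat.
Variables (A : 'M[C]_n) (lam : C) (v : 'cV[C]_n).
Hypothesis v0 : v != 0.
Hypothesis hinj : forall x, in_perp v x -> Alv A lam v x = 0 -> x = 0.

Let d := cdot v v.
Let d0 : d != 0.
Proof. by apply: contra v0 => /eqP /cdot_eq0 ->. Qed.

Definition Qm : 'M[C]_n := d^-1 *: (v *m map_mx conjc v^T).
Definition Pm : 'M[C]_n := 1%:M - Qm.
Definition Gm : 'M[C]_n := Pm *m (A - lam%:M) *m Pm + Qm.

Lemma QmE x : Qm *m x = (cdot x v / d) *: v.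
Proof.
rewrite /Qm -scalemxAl -mulmxA [map_mx _ _ *m x]mx11_scalar mul_mx_scalar scalerA.
congr (_ *: _); rewrite mulrC; congr (_ * _).
by rewrite !mxE /cdot; apply: eq_bigr => i _; rewrite !mxE mulrC.
Qed.

Lemma PmE x : Pm *m x = proj_perp v x.
Proof. by rewrite /Pm mulmxBl mul1mx QmE. Qed.

Lemma cdot_proj y : cdot (proj_perp v y) v = 0.
Proof. by rewrite /proj_perp cdotBl cdotZl -/d divfK ?subrr. Qed.

Lemma cdot_Qm x : cdot (Qm *m x) v = cdot x v.
Proof. by rewrite QmE cdotZl -/d divfK. Qed.

Lemma proj_perp_id x : in_perp v x -> proj_perp v x = x.
Proof. by rewrite /in_perp /proj_perp => ->; rewrite mul0r scale0r subr0. Qed.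

Lemma cdot_Gm x : cdot (Gm *m x) v = cdot x v.
Proof. by rewrite /Gm mulmxDl cdotDl -!mulmxA PmE cdot_proj add0r cdot_Qm. Qed.

Lemma AlvE x : Alv A lam v x = Pm *m (A - lam%:M) *m x.
Proof. by rewrite /Alv -mulmxA PmE. Qed.

Lemma Gm_perp x : in_perp v x -> Gm *m x = Alv A lam v x.
Proof.
move=> xp; rewrite /Gm mulmxDl QmE xp mul0r scale0r addr0 -mulmxA PmE.
by rewrite proj_perp_id // AlvE.
Qed.

Lemma Gm_inj (x : 'cV[C]_n) : Gm *m x = 0 -> x = 0.
Proof.
move=> h; have xp : in_perp v x by rewrite /in_perp -cdot_Gm h cdot0l.
by apply: hinj => //; rewrite -Gm_perp.
Qed.

Lemma Gm_unit : Gm \in unitmx.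
Proof.
rewrite -unitmx_tr -row_free_unit -kermx_eq0; apply/rowV0P => u /sub_kermxP hu.
have : Gm *m u^T = 0 by apply: trmx_inj; rewrite trmx_mul trmxK hu trmx0.
by move/Gm_inj => /(congr1 trmx); rewrite trmxK trmx0.
Qed.

Lemma Gm_sol y : in_perp v y ->
  in_perp v (invmx Gm *m y) /\ Alv A lam v (invmx Gm *m y) = y.
Proof.
move=> yp; have e : Gm *m (invmx Gm *m y) = y by rewrite mulKVmx // Gm_unit.
have xp : in_perp v (invmx Gm *m y) by rewrite /in_perp -cdot_Gm e.
by split => //; rewrite -Gm_perp.
Qed.

Lemma Alv_invE y : in_perp v y -> Alv_inv A lam v y = invmx Gm *m y.
Proof.
move=> yp; rewrite /Alv_inv.
have [xp xe] := Gm_sol yp.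
have := @xgetPex _ 0 [set x | in_perp v x /\ Alv A lam v x = y].
case/(_ (ex_intro _ _ (conj xp xe))) => zp ze.
set z := xget _ _ in zp ze *.
apply/eqP; rewrite -subr_eq0; apply/eqP; apply: hinj.
  by rewrite /in_perp cdotBl zp xp subrr.
by rewrite AlvE mulmxBr -!AlvE ze xe subrr.
Qed.

End Inv.

Section Final.
Variable R : realType.

Lemma final_ineq (U V W a mu : R) : 0 <= U -> 0 < V -> 0 <= W -> 0 <= a ->
  U ^+ 2 = a ^+ 2 * V ^+ 2 + W ^+ 2 -> W <= a * mu * V ->
  U * V / (a * V ^+ 2) <= Num.sqrt (1 + mu ^+ 2).
Proof.
move=> U0 V0 W0 a0 hU hW.
have s0 := sqrtr_ge0 (1 + mu ^+ 2).
have ss : Num.sqrt (1 + mu ^+ 2) ^+ 2 = 1 + mu ^+ 2.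
  by rewrite sqr_sqrtr // addr_ge0 ?sqr_ge0.
have [->|an0] := eqVneq a 0; first by rewrite mul0r invr0 mulr0.
have ap : 0 < a by rewrite lt_def an0 a0.
set s := Num.sqrt _ in s0 ss *.
have hU2 : U ^+ 2 <= (a * V * s) ^+ 2.
  rewrite exprMn ss hU; nra.
have hU3 : U <= a * V * s.
  by rewrite -ler_sqr ?nnegrE // !mulr_ge0 // ltW.
rewrite ler_pdivrMr; last by rewrite mulr_gt0 // exprn_gt0.
nra.
Qed.


Local Notation C := R[i].

Lemma cabs_real (r : R) : cabs (r%:C)%C = `|r|.
Proof. by rewrite /cabs /= expr0n /= addr0 sqrtr_sqr. Qed.

Lemma vnorm0 n : vnorm (0 : 'cV[C]_n) = 0.
Proof.
have := vnormZ 0 (0 : 'cV[C]_n); rewrite scale0r => ->.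
by rewrite (_ : cabs 0 = 0) ?mul0r // -(rmorph0 (real_complex R)) cabs_real normr0.
Qed.

Section Op.
Variable n : nat.
Variables (A : 'M[C]_n) (lam : C) (v : 'cV[C]_n).
Hypothesis v0 : v != 0.
Hypothesis hinj : forall x, in_perp v x -> Alv A lam v x = 0 -> x = 0.

Let o := opnorm_perp v (Alv_inv A lam v).

Let S := ([set vnorm (Alv_inv A lam v y) | y in [set y | in_perp v y /\ vnorm y <= 1]])%classic.

Let hub : has_ubound S.
Proof.
exists (frob (invmx (Gm A lam v))) => r [y [yp y1] <-].
rewrite (Alv_invE v0 hinj yp).
apply: le_trans (vnorm_mulmx _ _) _.
by rewrite ler_piMr ?frob_ge0.
Qed.

Let inS y : in_perp v y -> vnorm y <= 1 -> vnorm (Alv_inv A lam v y) <= o.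
Proof. by move=> yp y1; apply: (ub_le_sup hub); exists y. Qed.

Lemma op_ge0 : 0 <= o.
Proof.
have p0 : in_perp v (0 : 'cV[C]_n) by rewrite /in_perp cdot0l.
have p1 : vnorm (0 : 'cV[C]_n) <= 1 by rewrite vnorm0 ler01.
exact: le_trans (vnorm_ge0 _) (inS p0 p1).
Qed.

Lemma op_bound y : in_perp v y -> vnorm (Alv_inv A lam v y) <= o * vnorm y.
Proof.
move=> yp; rewrite (Alv_invE v0 hinj yp).
have [W0|Wn0] := eqVneq (vnorm y) 0.
  have y0 : y = 0.
    by apply: nR_eq0; rewrite -vnorm_sqr W0 expr0n.
  by rewrite W0 y0 mulmx0 vnorm0 mulr0.
have Wp : 0 < vnorm y by rewrite lt_def Wn0 vnorm_ge0.
set c := ((vnorm y)^-1)%:C%C.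
have cabs_c : cabs c = (vnorm y)^-1 by rewrite cabs_real ger0_norm // invr_ge0 ltW.
have yp' : in_perp v (c *: y) by rewrite /in_perp cdotZl yp mulr0.
have y1 : vnorm (c *: y) <= 1 by rewrite vnormZ cabs_c mulVf.
have := inS yp' y1; rewrite (Alv_invE v0 hinj yp') -scalemxAr vnormZ cabs_c.
by rewrite mulrC ler_pdivrMr.
Qed.

End Op.

End Final.

Lemma cabsM (R : realType) (a b : R[i]) : cabs (a * b) = cabs a * cabs b.
Proof. by apply: (@complexI R); rewrite rmorphM /= !cabsC normrM. Qed.

Lemma cabsN (R : realType) (a : R[i]) : cabs (- a) = cabs a.
Proof. by apply: (@complexI R); rewrite !cabsC normrN. Qed.

Unset Implicit Arguments. Set Strict Implicit.

Theorem lemma3p3 (R : realType) (n : nat) (A : 'M[R[i]]_n) (lam : R[i])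
    (v u : 'cV[R[i]]_n) :
  mup lam (char_poly A) = 1%N ->
  v != 0 -> A *m v = lam *: v ->
  u != 0 -> adjmx A *m u = conjc lam *: u ->
  vnorm u * vnorm v / cabs (cdot u v) <= Num.sqrt (1 + mu A lam v ^+ 2).
Proof.
move=> hm v0 Av u0 Au.
have hinj : forall x, in_perp v x -> Alv A lam v x = 0 -> x = 0.
  by move=> x; apply: Alv_inj.
set d := cdot v v.
have d0 : d != 0 by apply: contra v0 => /eqP /cdot_eq0 ->.
set al := cdot u v / d.
set w := proj_perp v u.
have wp : in_perp v w by apply: cdot_proj.
have [xp xe] := Gm_sol v0 hinj wp.
set x := invmx (Gm A lam v) *m w in xp xe.
have vw : cdot v w = 0 by rewrite cdotC wp rmorph0.
have key : cdot w w = - al^* * cdot (A *m x) v.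
  rewrite -{1}xe /Alv /proj_perp cdotBl cdotZl vw mulr0 subr0.
  rewrite /w /proj_perp -/d -/al cdotBr cdotZr.
  rewrite mulmxBl mul_scalar_mx !cdotBl !cdotZl xp mulr0 subr0.
  rewrite [cdot (A *m x) u]cdot_mulmx Au cdotZr.
  rewrite (_ : (conjc lam)^* = lam); last by rewrite /= conjCK.
  by rewrite subrr sub0r mulNr.
set k := cabs (cdot (A *m x) v).
have nw : nR w = cabs al * k.
  apply: (@complexI R); rewrite nRC [RHS]rmorphM /=.
  have : 0 <= cdot w w by apply: cdot_ge0.
  move=> /ger0_norm <-; rewrite key.
  by rewrite !cabsC normrM normrN norm_conjC.
set f := frob A.
set o := opnorm_perp v (Alv_inv A lam v).
have o0 : 0 <= o by apply: op_ge0.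
have f0 : 0 <= f by apply: frob_ge0.
have hx : vnorm x <= o * vnorm w.
  by rewrite /x -(Alv_invE v0 hinj wp); apply: op_bound.
have hk : k <= f * (o * vnorm w) * vnorm v.
  apply: le_trans (cabs_cdot_le _ _) _.
  apply: ler_wpM2r; first exact: vnorm_ge0.
  apply: le_trans (vnorm_mulmx _ _) _.
  by apply: ler_wpM2l.
have hu : u = al *: v + w by rewrite /w /proj_perp -/d -/al addrC subrK.
clearbody x w.
have nu : nR u = cabs al ^+ 2 * nR v + nR w.
  apply: (@complexI R); rewrite rmorphD rmorphM rmorphXn /= !nRC cabsC normCK.
  have e : cdot (al *: v + w) (al *: v + w) = al * al^* * d + cdot w w.
    rewrite cdotDl !cdotDr !cdotZl !cdotZr -/d vw.
    by rewrite (cdotC v w) vw rmorph0 !mulr0 !addr0 add0r mulrA.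
  by rewrite -hu in e; rewrite e.
have cuv : cabs (cdot u v) = cabs al * vnorm v ^+ 2.
  rewrite vnorm_sqr (_ : cdot u v = al * d); last by rewrite /al divfK.
  rewrite cabsM /d -nRC cabs_real ger0_norm //; exact: nR_ge0.
have V0 : 0 < vnorm v.
  rewrite lt_def vnorm_ge0 andbT; apply: contra v0 => /eqP h.
  by apply/eqP/nR_eq0; rewrite -vnorm_sqr h expr0n.
rewrite cuv; apply: (@final_ineq _ _ _ (vnorm w)).
- exact: vnorm_ge0.
- exact: V0.
- exact: vnorm_ge0.
- exact: cabs_ge0.
- by rewrite !vnorm_sqr nu.
have W2 : vnorm w ^+ 2 <= vnorm w * (cabs al * mu A lam v * vnorm v).
  rewrite vnorm_sqr nw /mu -/f -/o.
  have a0 := cabs_ge0 al.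
  have W0 := vnorm_ge0 w.
  nra.
have W0 := vnorm_ge0 w.
have K0 : 0 <= cabs al * mu A lam v * vnorm v.
  by rewrite !mulr_ge0 ?cabs_ge0 ?vnorm_ge0 // /mu mulr_ge0.
nra.
Qed.
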